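(* Let $(X,\tau)$ be a topological space, let $X_n\subseteq X$ ($n\in\mathbb{N}\cup\{0\}$) be subspaces, and let $f_n:X_n\to X_{n+1}$ be continuous maps, forming the nonautonomous discrete system $\{f_n\}_{n=0}^\infty$. Assume that $X_0$ is a second countable subspace of $X$ and that $X$ is first countable at every point of $X_0$. Suppose that the system $\{f_n\}_{n=0}^\infty$ is topologically transitive on $X_0$ and that $\overline{O}\neq X_0$, where $$O=\{x\in X_0 : \overline{\operatorname{orb}(x)}^{X}\cap X_0 = X_0\}.$$ Then $X_0$ is not a Baire space.
   Context: For $x_0\in X_0$, the orbit of $x_0$ under the system is $\operatorname{orb}(x_0)=\{x_0,\ f_0(x_0),\ f_1\circ f_0(x_0),\ \dots,\ f_n\circ f_{n-1}\circ\cdots\circ f_0(x_0),\ \dots\}$, and $\overline{\operatorname{orb}(x)}^{X}$ denotes its closure in $X$. The closure $\overline{O}$ is taken in $X_0$. The system $\{f_n\}_{n=0}^\infty$ is called topologically transitive on $X_0$ if for any two nonempty open sets $U_0,V_0$ of $X_0$ there exists $n\in\mathbb{N}$ such that $(f_{n-1}\circ f_{n-2}\circ\cdots\circ f_0)(U_0)\cap V_0\neq\emptyset$. A space is Baire if the intersection of any sequence of dense open subsets is dense. *)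

(* Defs.v *)
From Stdlib Require Import Classical.

Set Implicit Arguments.

Record topology (X : Type) := Topology {
  open : (X -> Prop) -> Prop;
  open_full : open (fun _ => True);
  open_inter : forall U V, open U -> open V -> open (fun x => U x /\ V x);
  open_union : forall (I : Type) (F : I -> X -> Prop),
      (forall i, open (F i)) -> open (fun x => exists i, F i x)
}.

Section Topo.
Variable X : Type.
Variable T : topology X.

(* A subset S of X is regarded as a subspace with the subspace topology:
   the open sets of S are the traces U ∩ S of open sets U of X. *)

(* Continuity of f : A -> B (A, B subspaces of X), represented by a total
   map f : X -> X mapping A into B: preimages of open sets of B are open in A. *)
Definition continuous_sub (A B : X -> Prop) (f : X -> X) : Prop :=
  (forall x, A x -> B (f x)) /\
  (forall V, open T V ->
     exists U, open T U /\ forall x, A x -> (U x <-> V (f x))).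

(* Second countability of the subspace S: a countable (nat-indexed, possibly
   with repetitions / empty members) base of the subspace topology. *)
Definition second_countable_sub (S : X -> Prop) : Prop :=
  exists B : nat -> X -> Prop,
    (forall k, open T (B k)) /\
    (forall U x, open T U -> U x -> S x ->
       exists k, B k x /\ forall y, S y -> B k y -> U y).

Definition first_countable_at (x : X) : Prop :=
  exists N : nat -> X -> Prop,
    (forall k, open T (N k) /\ N k x) /\
    (forall U, open T U -> U x -> exists k, forall y, N k y -> U y).

Definition closure (A : X -> Prop) (y : X) : Prop :=
  forall U, open T U -> U y -> exists z, U z /\ A z.

Definition closure_in (S A : X -> Prop) (y : X) : Prop :=
  S y /\ forall U, open T U -> U y -> exists z, U z /\ S z /\ A z.

Definition dense_in (S A : X -> Prop) : Prop :=
  forall W, open T W -> (exists y, W y /\ S y) ->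
    exists y, W y /\ S y /\ A y.

Definition baire_sub (S : X -> Prop) : Prop :=
  forall D : nat -> X -> Prop,
    (forall k, open T (D k)) ->
    (forall k, dense_in S (fun x => D k x /\ S x)) ->
    dense_in S (fun x => S x /\ forall k, D k x).

End Topo.

Fixpoint sys_iter {X : Type} (f : nat -> X -> X) (n : nat) (x : X) : X :=
  match n with
  | O => x
  | S m => f m (sys_iter f m x)
  end.

Definition orb {X : Type} (f : nat -> X -> X) (x : X) (y : X) : Prop :=
  exists n, y = sys_iter f n x.

Definition top_transitive {X : Type} (T : topology X) (X0 : X -> Prop)
    (f : nat -> X -> X) : Prop :=
  forall U V, open T U -> open T V ->
    (exists x, U x /\ X0 x) -> (exists x, V x /\ X0 x) ->
    exists n, 1 <= n /\ exists x, U x /\ X0 x /\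
      V (sys_iter f n x) /\ X0 (sys_iter f n x).

Definition dense_orbit_points {X : Type} (T : topology X) (X0 : X -> Prop)
    (f : nat -> X -> X) (x : X) : Prop :=
  X0 x /\ forall y, X0 y -> closure T (orb f x) y.

(* Main.v *)
Require Import Defs.
From Stdlib Require Import Classical IndefiniteDescription Cantor.

Lemma iter_cont (X : Type) (T : topology X) (Xs : nat -> X -> Prop)
    (f : nat -> X -> X)
    (Hcont : forall n, continuous_sub T (Xs n) (Xs (S n)) (f n)) :
  forall n, (forall z, Xs 0 z -> Xs n (sys_iter f n z)) /\
    forall V, open T V -> exists U, open T U /\
      forall z, Xs 0 z -> (U z <-> V (sys_iter f n z)).
Proof.
  induction n as [|n [IH1 IH2]].
  - split; [auto|]. intros V HV. exists V. split; [auto|]. simpl; tauto.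
  - split.
    + intros z Hz. simpl. apply (proj1 (Hcont n)). auto.
    + intros V HV. destruct (proj2 (Hcont n) V HV) as [U1 [HU1 E1]].
      destruct (IH2 U1 HU1) as [U [HU E]]. exists U. split; [auto|].
      intros z Hz. simpl. rewrite E by auto. apply E1. auto.
Qed.

Lemma pi_base (X : Type) (T : topology X) (X0 : X -> Prop)
    (H2c : second_countable_sub T X0)
    (H1c : forall x, X0 x -> first_countable_at T x)
    (y0 : X) (Hy0 : X0 y0) :
  exists W : nat -> X -> Prop,
    (forall m, open T (W m) /\ exists y, W m y /\ X0 y) /\
    (forall U y, open T U -> U y -> X0 y -> exists m, forall z, W m z -> U z).
Proof.
  destruct H2c as [B [HBo HB]].
  assert (Hd : forall k, exists d, X0 d /\ ((exists y, B k y /\ X0 y) -> B k d)).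
  { intro k. destruct (classic (exists y, B k y /\ X0 y)) as [[y [H1 H2]]|Hn].
    - exists y; auto.
    - exists y0; split; [auto| intro; contradiction]. }
  apply functional_choice in Hd. destruct Hd as [d Hd].
  assert (HN : forall k, exists N : nat -> X -> Prop,
     (forall j, open T (N j) /\ N j (d k)) /\
     (forall U, open T U -> U (d k) -> exists j, forall y, N j y -> U y)).
  { intro k. apply H1c. apply Hd. }
  apply functional_choice in HN. destruct HN as [N HN].
  exists (fun m => N (fst (of_nat m)) (snd (of_nat m))). split.
  - intro m. destruct (HN (fst (of_nat m))) as [H1 _]. destruct (H1 (snd (of_nat m))).
    split; [auto|]. exists (d (fst (of_nat m))). split; [auto|]. apply Hd.
  - intros U y HU Uy Xy. destruct (HB U y HU Uy Xy) as [k [Bk Hk]].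
    assert (Xd : X0 (d k)) by apply Hd.
    assert (Bd : B k (d k)) by (apply Hd; eauto).
    destruct (proj2 (HN k) U HU (Hk _ Xd Bd)) as [j Hj].
    exists (to_nat (k, j)). rewrite cancel_of_to. simpl. auto.
Qed.

Theorem theorem1p1 (X : Type) (T : topology X) (Xs : nat -> X -> Prop)
    (f : nat -> X -> X)
    (Hcont : forall n, continuous_sub T (Xs n) (Xs (S n)) (f n))
    (H2c : second_countable_sub T (Xs 0))
    (H1c : forall x, Xs 0 x -> first_countable_at T x)
    (Htrans : top_transitive T (Xs 0) f)
    (HO : ~ (forall y, closure_in T (Xs 0) (dense_orbit_points T (Xs 0) f) y
                       <-> Xs 0 y)) :
  ~ baire_sub T (Xs 0).
Proof.
  intro Hb.
  apply not_all_ex_not in HO. destruct HO as [y Hy].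
  assert (Xy : Xs 0 y /\ ~ closure_in T (Xs 0) (dense_orbit_points T (Xs 0) f) y).
  { destruct (classic (Xs 0 y)) as [H|H].
    - split; [auto|]. intro C. apply Hy. split; auto.
    - exfalso. apply Hy. split; [intros [A _]; contradiction | intro; contradiction]. }
  destruct Xy as [Xy Ncl].
  assert (HU : exists U, open T U /\ U y /\
     forall z, U z -> Xs 0 z -> ~ dense_orbit_points T (Xs 0) f z).
  { apply NNPP. intro C. apply Ncl. split; [auto|]. intros U HU Uy.
    apply NNPP. intro C2. apply C. exists U. repeat split; auto.
    intros z Uz Xz Oz. apply C2. eauto. }
  destruct HU as [U0 [HU0 [U0y HU0']]].
  destruct (@pi_base X T (Xs 0) H2c H1c y Xy) as [W [HW HWb]].
  pose (D := fun m x => exists p : {p : nat * (X -> Prop) | open T (snd p) /\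
            forall z, Xs 0 z -> (snd p z <-> W m (sys_iter f (S (fst p)) z))},
            snd (proj1_sig p) x).
  assert (HDo : forall m, open T (D m)).
  { intro m. unfold D. apply (open_union T (fun p => snd (proj1_sig p))).
    intros [p Hp]. simpl. apply Hp. }
  assert (HDd : forall m, dense_in T (Xs 0) (fun x => D m x /\ Xs 0 x)).
  { intros m W' HW' HW'ne. destruct (HW m) as [HWm HWne].
    destruct (Htrans W' (W m) HW' HWm HW'ne HWne) as [n [Hn [x [W'x [Xx [Wx _]]]]]].
    destruct n as [|n]; [inversion Hn|].
    destruct (proj2 (@iter_cont X T Xs f Hcont (S n)) (W m) HWm) as [U [HU E]].
    exists x. split; [auto|]. split; [auto|]. split; [|auto].
    exists (exist _ (n, U) (conj HU E)). simpl. apply E; auto. }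
  destruct (Hb D HDo HDd U0 HU0 (ex_intro _ y (conj U0y Xy))) as [z [U0z [Xz Dz]]].
  apply (HU0' z U0z Xz). split; [auto|].
  intros y' Xy' U' HU' U'y'.
  destruct (HWb U' y' HU' U'y' Xy') as [m Hm].
  destruct (proj2 Dz m) as [[[n P] [HP E]] Pz]. simpl in *.
  exists (sys_iter f (S n) z). split.
  - apply Hm. apply E; auto.
  - exists (S n). reflexivity.
Qed.
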